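(* Suppose conditions (A.2) and (A.3) hold. Let $\gamma_k:=\sum_{i=0}^{k-1}\alpha_i$, let $g:(0,\infty)\to(0,\infty)$, define $\beta_k:=g(\gamma_k)$, let $T>0$ and let $\{m_k\}_k$ be the time indices associated with $T$. Assume (i) $\sum_{k=0}^\infty\alpha_k^2g(\gamma_k)^2\sigma_k^2<\infty$; (ii) there is an interval $I=[\iota,\infty)$ such that $g'(x)>0$ for all $x\in I$. Then condition (A.4) holds (with this sequence $\{\beta_k\}_k$), and for every $\delta\in(0,1)$ there is $N_\delta\in\mathbb N$ such that (a) $\delta Tk\le\gamma_{m_{n+k}}-\gamma_{m_n}\le Tk$ for all $k\in\mathbb N$ and $n\ge N_\delta$; (b) $\sum_{k=n}^\infty g(\gamma_{m_k})^{-2\vartheta}\le g(\gamma_{m_n})^{-2\vartheta}+(\delta T)^{-1}\int_{\gamma_{m_n}}^\infty g(t)^{-2\vartheta}\,\mathrm dt$ for all $\vartheta\in(0,1)$ and $n\ge N_\delta$.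
   Context: Setting: a filtered probability space $(\Omega,\mathcal F,\{\mathcal F_k\}_k,\mathbb P)$, $f:\mathbb R^d\to\mathbb R$ continuously differentiable, step sizes $\{\alpha_k\}_k\subset(0,\infty)$, and a stochastic process $\{x^k\}_k$ ($x^k$ $\mathcal F_k$-measurable) with $\mathcal F_{k+1}$-measurable stochastic gradients $g^k$ and errors $e^k=g^k-\nabla f(x^k)$ (as generated by the normal map-based stochastic proximal gradient method $z^{k+1}=z^k-\alpha_k(g^k+(z^k-\mathrm{prox}_{\lambda\varphi}(z^k))/\lambda)$, $x^{k}=\mathrm{prox}_{\lambda\varphi}(z^{k})$). Conditions: (A.2) $\mathbb E[g^k\mid\mathcal F_k]=\nabla f(x^k)$ a.s. and there is $\{\sigma_k\}_k\subseteq\mathbb R_+$ with $\mathbb E\|e^k\|^2\le\sigma_k^2$ for all $k$. (A.3) $\sum_k\alpha_k=\infty$, $\alpha_k\to0$. (A.4) There is a positive sequence $\{\beta_k\}_k$, non-decreasing for all $k$ sufficiently large, with $\sum_k\alpha_k^2\beta_k^2\sigma_k^2<\infty$. Time indices: $\tau_{k,n}=\sum_{i=k}^{n-1}\alpha_i$, $\varpi(k,T)=\max\{k+1,\sup\{n\ge k:\tau_{k,n}\le T\}\}$, $m_0=0$, $m_{k+1}=\varpi(m_k,T)$. *)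

(* Defs.v *)
From HB Require Import structures.
From mathcomp Require Import all_boot all_order all_algebra.
From mathcomp Require Import all_classical all_reals all_analysis.
Set Implicit Arguments. Unset Strict Implicit. Unset Printing Implicit Defensive.
Import Order.TTheory GRing.Theory Num.Theory.
Import numFieldNormedType.Exports.
Local Open Scope classical_set_scope.
Local Open Scope ring_scope.

Definition gammaseq {R : realType} (alpha : nat -> R) (k : nat) : R :=
  \sum_(0 <= i < k) alpha i.

Definition tau {R : realType} (alpha : nat -> R) (k n : nat) : R :=
  \sum_(k <= i < n) alpha i.

(* supremum of a set of naturals: its maximum when it has one
   (i.e. when it is nonempty and bounded); 0 otherwise (never used below,
   since the relevant sets are nonempty and bounded under (A.3)). *)
Definition natsup (A : set nat) : nat :=
  match pselect (exists m, A m /\ forall n, A n -> (n <= m)%N) with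
  | left H => projT1 (cid H)
  | right _ => 0%N
  end.

Definition varpi {R : realType} (alpha : nat -> R) (k : nat) (T : R) : nat :=
  maxn k.+1 (natsup [set n | (k <= n)%N /\ tau alpha k n <= T]).

Fixpoint mseq {R : realType} (alpha : nat -> R) (T : R) (k : nat) : nat :=
  match k with
  | 0 => 0%N
  | k'.+1 => varpi alpha (mseq alpha T k') T
  end.

(* Main.v *)
Require Import Defs.
From HB Require Import structures.
From mathcomp Require Import all_boot all_order all_algebra.
From mathcomp Require Import all_classical all_reals all_analysis.
From mathcomp Require Import measurable_realfun.
From mathcomp Require Import zify ring lra.
Import Order.TTheory GRing.Theory Num.Theory.
Import numFieldNormedType.Exports.
Local Open Scope classical_set_scope.
Local Open Scope ring_scope.
Section Aux.
Variable R : realType.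
Variable alpha : nat -> R.
Hypothesis Halpha : forall k, 0 < alpha k.

Lemma gammaS k : gammaseq alpha k.+1 = gammaseq alpha k + alpha k.
Proof. by rewrite /gammaseq big_nat_recr. Qed.

Lemma gamma_ltS k : gammaseq alpha k < gammaseq alpha k.+1.
Proof. by rewrite gammaS ltrDl. Qed.

Lemma gamma_lt i j : (i < j)%N -> gammaseq alpha i < gammaseq alpha j.
Proof.
elim: j => // j IH; rewrite ltnS leq_eqVlt => /orP[/eqP->|/IH h].
  exact: gamma_ltS.
exact: lt_trans h (gamma_ltS j).
Qed.

Lemma gamma_le i j : (i <= j)%N -> gammaseq alpha i <= gammaseq alpha j.
Proof. by rewrite leq_eqVlt => /orP[/eqP->//|/gamma_lt/ltW]. Qed.

Lemma gamma0 : gammaseq alpha 0 = 0.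
Proof. by rewrite /gammaseq big_geq. Qed.

Lemma gamma_gt0 k : (0 < k)%N -> 0 < gammaseq alpha k.
Proof. by move/gamma_lt; rewrite gamma0. Qed.

Lemma tauE k n : (k <= n)%N -> tau alpha k n = gammaseq alpha n - gammaseq alpha k.
Proof.
move=> kn; rewrite /gammaseq /tau (@big_cat_nat _ _ _ k 0 n) //=.
by rewrite [X in X - _]addrC addrK.
Qed.

Hypothesis Hdiv : series alpha @ \oo --> +oo.

Lemma gamma_unb M : exists N, M < gammaseq alpha N.
Proof.
have /cvgryPge/(_ (M + 1)) [N _ HN] := Hdiv.
exists N; have := HN N (leqnn N); rewrite /series /=.
rewrite /gammaseq; lra.
Qed.

Lemma natsupP (A : set nat) : (exists m, A m /\ forall n, A n -> (n <= m)%N) ->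
  A (natsup A) /\ forall n, A n -> (n <= natsup A)%N.
Proof.
move=> H; rewrite /natsup; case: pselect => [H'|//].
exact: (projT2 (cid H')).
Qed.

Lemma S_max k T : 0 <= T ->
  exists m, [set n | (k <= n)%N /\ tau alpha k n <= T] m /\
  forall n, [set n | (k <= n)%N /\ tau alpha k n <= T] n -> (n <= m)%N.
Proof.
move=> T0.
have [N HN] := gamma_unb (gammaseq alpha k + T).
pose P := fun n => `[< (k <= n)%N /\ tau alpha k n <= T >].
have exP : exists n, P n.
  by exists k; apply/asboolP; split => //; rewrite /tau big_geq.
have ubP : forall n, P n -> (n <= N)%N.
  move=> n /asboolP [kn]; rewrite tauE // => hn.
  rewrite leqNgt; apply/negP => /gamma_lt; lra.
case: (ex_maxnP exP ubP) => i Pi Hi; exists i; split.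
  exact/asboolP.
by move=> n Sn; apply: Hi; exact/asboolP.
Qed.

Lemma varpi_gt k T : (k < varpi alpha k T)%N.
Proof. by rewrite /varpi leq_max leqnn. Qed.

Lemma varpi_bounds k T eps : 0 < T -> eps <= T ->
  (forall j, (k <= j)%N -> alpha j <= eps) ->
  T - eps <= gammaseq alpha (varpi alpha k T) - gammaseq alpha k <= T.
Proof.
move=> T0 eT Ha.
have [Ss Smax] := natsupP _ (@S_max k T (ltW T0)).
set s := natsup _ in Ss Smax *.
have k1 : (k.+1 <= s)%N.
  apply: Smax; split => //; rewrite tauE // gammaS.
  have := Ha k (leqnn k); lra.
have -> : varpi alpha k T = s by rewrite /varpi; apply/maxn_idPr.
case: Ss => ks; rewrite tauE // => Hs.
have Hs1 : ~ (tau alpha k s.+1 <= T).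
  by move=> h; have := Smax s.+1 (conj (leqW ks) h); rewrite ltnn.
move: Hs1; rewrite tauE ?(leqW ks) // gammaS => /negP; rewrite -ltNge => Hs1.
have := Ha s ks; move=> h; apply/andP; split; lra.
Qed.

Lemma mseq_ge T n : (n <= mseq alpha T n)%N.
Proof.
elim: n => //= n IH; exact: leq_ltn_trans IH (varpi_gt _ _).
Qed.

End Aux.
Section Aux2.
Variable R : realType.
Variable g : R -> R.
Variable iota : R.
Hypothesis iota0 : 0 < iota.
Hypothesis Hg : forall x, iota <= x -> derivable g x 1 /\ 0 < derive1 g x.
Hypothesis Hgpos : forall x, 0 < x -> 0 < g x.

Lemma g_le x y : iota <= x -> x <= y -> g x <= g y.
Proof.
move=> ix; rewrite le_eqVlt => /orP[/eqP->//|xy]; apply: ltW.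
apply: (@gtr0_derive1_lt_cc _ g x y).
- move=> z; rewrite in_itv /= => /andP[xz _]; apply: (Hg z _).1; lra.
- move=> z; rewrite in_itv /= => /andP[xz _]; apply: (Hg z _).2; lra.
- apply: derivable_within_continuous => z; rewrite in_itv /= => /andP[xz _].
  apply: (Hg z _).1; lra.
- by rewrite in_itv /= lexx (ltW xy).
- by rewrite in_itv /= lexx (ltW xy).
- exact: xy.
Qed.

Variable th : R.
Hypothesis th0 : 0 < th.
Let h t := g t `^ (- (2 * th)).

Lemma h_le x y : iota <= x -> x <= y -> h y <= h x.
Proof.
move=> ix xy; rewrite /h !powRN.
have gx : 0 < g x by apply: Hgpos; exact: lt_le_trans iota0 ix.
have gy : 0 < g y by apply: Hgpos; exact: lt_le_trans iota0 (le_trans ix xy).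
rewrite lef_pV2 ?posrE ?powR_gt0 //.
apply: ge0_ler_powR.
- by rewrite mulr_ge0 // ltW.
- by rewrite nnegrE ltW.
- by rewrite nnegrE ltW.
- exact: g_le.
Qed.

Lemma h_ge0 x : 0 <= h x.
Proof. exact: powR_ge0. Qed.

Lemma h_meas (D : set R) : measurable D -> D `<=` [set x | iota <= x] ->
  measurable_fun D (EFin \o h).
Proof.
move=> mD DI.
apply/(measurable_EFinP D h).
apply: (@eq_measurable_fun _ _ _ _ D (fun t => h (Num.max t iota))).
  move=> t; rewrite inE => /DI /= it; congr h; apply/max_idPl; exact: it.
apply: nonincreasing_measurable => // x y xy; apply: h_le.
  by rewrite le_max lexx orbT.
by rewrite le_max; apply/orP; case: (leP x iota) => xi; [right|left] => //;
  rewrite (le_trans _ xy) // ltW.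
Qed.

Local Open Scope ereal_scope.

Lemma int_step c b e : (iota <= c)%R -> (0 < e)%R -> (e <= b - c)%R ->
  (h b * e)%:E <= \int[lebesgue_measure]_(t in `[c, b[) (h t)%:E.
Proof.
move=> ic e0 ebc.
have cb : (c < b)%R by lra.
apply: (@le_trans _ _ (\int[lebesgue_measure]_(t in `[c,b[) (cst (h b)%:E) t)).
  rewrite integral_cst //= lebesgue_measure_itv /= lte_fin cb /= -EFinB -EFinM lee_fin.
  apply: ler_wpM2l; [exact: h_ge0 | lra].
apply: ge0_le_integral => //.
- move=> t _; rewrite lee_fin; exact: h_ge0.
- apply: h_meas => // t /=; rewrite in_itv /= => /andP[ct _]; lra.
- move=> t /=; rewrite in_itv /= => /andP[ct tb]; rewrite lee_fin.
  apply: h_le; lra.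
Qed.

Lemma int_split a b c : (iota <= a)%R -> (a <= b)%R -> (b <= c)%R ->
  \int[lebesgue_measure]_(t in `[a, c[) (h t)%:E =
  \int[lebesgue_measure]_(t in `[a, b[) (h t)%:E +
  \int[lebesgue_measure]_(t in `[b, c[) (h t)%:E.
Proof.
move=> ia ab bc.
rewrite (@itv_bndbnd_setU _ _ (BLeft a) (BLeft b) (BLeft c)) ?bnd_simp //.
apply: integral_setU => //.
- rewrite -(@itv_bndbnd_setU _ _ (BLeft a) (BLeft b) (BLeft c)) ?bnd_simp //.
  apply: h_meas => // t /=; rewrite in_itv /= => /andP[ct _]; lra.
- rewrite disj_set2E; apply/eqP; apply/seteqP; split => t //=.
  rewrite !in_itv /= => -[/andP[_ tb] /andP[bt _]]; lra.
Qed.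

Lemma int_sub a b : (iota <= a)%R ->
  \int[lebesgue_measure]_(t in `[a, b[) (h t)%:E <=
  \int[lebesgue_measure]_(t in `[a, +oo[) (h t)%:E.
Proof.
move=> ia; apply: ge0_subset_integral => //.
- apply: h_meas => // t /=; rewrite in_itv /= andbT => ct; lra.
- move=> t _; rewrite lee_fin; exact: h_ge0.
- by move=> t /=; rewrite !in_itv /= andbT => /andP[-> _].
Qed.


Variables (a : nat -> R) (n : nat) (e : R).
Hypothesis e0 : (0 < e)%R.
Hypothesis Hia : forall k, (n <= k)%N -> (iota <= a k)%R.
Hypothesis Hgap : forall k, (n <= k)%N -> (e <= a k.+1 - a k)%R.

Lemma a_mono N : (a n <= a (n + N)%N)%R.
Proof.
elim: N => [|N IH]; first by rewrite addn0.
rewrite addnS; have := Hgap _ (leq_addr N n); have := e0; lra.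
Qed.

Lemma hstep k : (n <= k)%N ->
  (h (a k.+1))%:E <= (e^-1)%:E * \int[lebesgue_measure]_(t in `[a k, a k.+1[) (h t)%:E.
Proof.
move=> nk.
have H := @int_step (a k) (a k.+1) e (Hia _ nk) e0 (Hgap _ nk).
have c0 : 0 <= (e^-1)%:E by rewrite lee_fin invr_ge0 ltW.
apply: le_trans (lee_wpmul2l c0 H).
rewrite -EFinM lee_fin mulrCA mulVf ?mulr1 //; exact: lt0r_neq0.
Qed.

Lemma hpartial N :
  \sum_(n <= k < n + N.+1) (h (a k))%:E <=
  (h (a n))%:E + (e^-1)%:E * \int[lebesgue_measure]_(t in `[a n, a (n + N)%N[) (h t)%:E.
Proof.
have c0 : 0 <= (e^-1)%:E by rewrite lee_fin invr_ge0 ltW.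
elim: N => [|N IH].
  rewrite addn1 big_nat1; apply: leeDl; apply: mule_ge0 => //.
  apply: integral_ge0 => t _; rewrite lee_fin; exact: h_ge0.
rewrite addnS big_nat_recr /=; last exact: leq_addr.
rewrite addnS (@int_split (a n) (a (n + N)%N) (a (n + N).+1) (Hia _ (leqnn n)) (a_mono N)); last first.
  have := Hgap _ (leq_addr N n); have := e0; lra.
rewrite ge0_muleDr; first last.
- apply: integral_ge0 => t _; rewrite lee_fin; exact: h_ge0.
- apply: integral_ge0 => t _; rewrite lee_fin; exact: h_ge0.
rewrite addeA; rewrite addnS in IH; apply: leeD IH _; exact: hstep (leq_addr N n).
Qed.

Lemma hseries :
  \sum_(n <= k <oo) (h (a k))%:E <=
  (h (a n))%:E + (e^-1)%:E * \int[lebesgue_measure]_(t in `[a n, +oo[) (h t)%:E.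
Proof.
have c0 : 0 <= (e^-1)%:E by rewrite lee_fin invr_ge0 ltW.
apply: lime_le.
  by apply: is_cvg_nneseries => k _ _; rewrite lee_fin; exact: h_ge0.
exists n.+1 => // N /= hN.
have -> : N = (n + (N - n.+1).+1)%N by lia.
apply: le_trans (hpartial _) _.
apply: leeD2l; apply: lee_wpmul2l => //; exact: (@int_sub (a n) _ (Hia _ (leqnn n))).
Qed.

End Aux2.
Theorem lemma3p8 (R : realType) (alpha sigma : nat -> R) (g : R -> R) (T : R)
  (* (A.2), deterministic part: sigma_k >= 0 *)
  (Hsigma : forall k, 0 <= sigma k)
  (* step sizes are positive *)
  (Halpha : forall k, 0 < alpha k)
  (* (A.3) *)
  (Hdiv : series alpha @ \oo --> +oo)
  (Hto0 : alpha @ \oo --> 0)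
  (* g : (0,oo) -> (0,oo) *)
  (Hgpos : forall x, 0 < x -> 0 < g x)
  (HT : 0 < T)
  (* (i) *)
  (Hi : cvg (series (fun k => alpha k ^+ 2 * g (gammaseq alpha k) ^+ 2 * sigma k ^+ 2) @ \oo))
  (* (ii) *)
  (Hii : exists iota : R, 0 < iota /\
           forall x, iota <= x -> derivable g x 1 /\ 0 < derive1 g x) :
  let beta := fun k => g (gammaseq alpha k) in
  let m := mseq alpha T in
  (* (A.4) for beta *)
  ((forall k, (0 < k)%N -> 0 < beta k) /\
   (exists K, forall k, (K <= k)%N -> beta k <= beta k.+1) /\
   cvg (series (fun k => alpha k ^+ 2 * beta k ^+ 2 * sigma k ^+ 2) @ \oo)) /\
  (forall delta : R, 0 < delta < 1 ->
    exists Nd : nat,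
      (forall k n, (Nd <= n)%N ->
         delta * T * k%:R <= gammaseq alpha (m (n + k)%N) - gammaseq alpha (m n)
         <= T * k%:R) /\
      (forall (theta : R) n, 0 < theta < 1 -> (Nd <= n)%N ->
         (\sum_(n <= k <oo) ((g (gammaseq alpha (m k))) `^ (- (2 * theta)))%:E <=
          ((g (gammaseq alpha (m n))) `^ (- (2 * theta)))%:E +
          ((delta * T)^-1)%:E *
          \int[lebesgue_measure]_(t in `[gammaseq alpha (m n), +oo[%classic)
              ((g t) `^ (- (2 * theta)))%:E)%E)).
Proof.
move=> beta m.
have [iota [iota0 Hg]] := Hii.
have gle := @g_le R g iota Hg.
have gam_le := @gamma_le R alpha Halpha.
have [K HK] := @gamma_unb R alpha Hdiv iota.
split.
  split; first by move=> k k0; apply: Hgpos; exact: gamma_gt0.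
  split; last exact: Hi.
  exists K => k Kk; apply: gle.
    by apply: ltW; apply: lt_le_trans HK (gam_le _ _ Kk).
  exact: gam_le (leqnSn k).
move=> delta /andP[d0 d1].
have dT0 : 0 < delta * T by rewrite mulr_gt0.
have dT : delta * T < T by rewrite -[X in _ < X](mul1r T) ltr_pM2r.
set eps := T - delta * T.
have eps0 : 0 < eps by rewrite /eps; lra.
have /cvgrPdist_le/(_ eps eps0) [N1 _ HN1] := Hto0.
have Hsmall : forall j, (N1 <= j)%N -> alpha j <= eps.
  by move=> j /HN1; rewrite sub0r normrN gtr0_norm.
exists (maxn (maxn N1 K) 1).
have mono : forall n, (maxn (maxn N1 K) 1 <= n)%N ->
    delta * T <= gammaseq alpha (m n.+1) - gammaseq alpha (m n) <= T.
  move=> n Nn.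
  have := @varpi_bounds R alpha Halpha Hdiv (m n) T eps HT _ _.
  rewrite /eps opprB addrCA subrr addr0; apply.
  - by rewrite /eps; lra.
  - move=> j mj; apply: Hsmall; have := @mseq_ge R alpha T n; rewrite -/m; lia.
split.
  move=> k n Nn; elim: k => [|k IH].
    by rewrite addn0 subrr !mulr0 lexx.
  rewrite addnS; have := mono (n + k)%N (leq_trans Nn (leq_addr k n)).
  move: IH; rewrite -natr1 !mulrDr !mulr1.
  move=> /andP[h1 h2] /andP[h3 h4]; apply/andP; split; lra.
move=> theta n /andP[th0 th1] Nn.
apply: (@hseries R g iota iota0 Hg Hgpos theta th0 (fun k => gammaseq alpha (m k)) n (delta * T) dT0).
- move=> k nk; apply: ltW; apply: lt_le_trans HK (gam_le _ _ _).
  have := @mseq_ge R alpha T k; rewrite -/m; lia.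
- move=> k nk; have /andP[] // := mono k (leq_trans Nn nk).
Qed.
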